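(* Let $n\ge2$, let $m\ge 3$ be odd, let $\mathcal{A}$ be an $m$th order $n$-dimensional strong Hankel tensor, and let $x=(x_1,\dots,x_n)^\top$ be a Z-eigenvector of $\mathcal{A}$ associated with a Z-eigenvalue $\lambda$. If $\lambda>0$, then $x_i\ge 0$ for all odd $i$; if $\lambda<0$, then $x_i\le0$ for all odd $i$.
   Context: $\mathcal{A}=(a_{i_1\cdots i_m})$ is a Hankel tensor if $a_{i_1\cdots i_m}=v_{i_1+\cdots+i_m-m}$ for some real $v=(v_0,\dots,v_{(n-1)m})^\top$. Let $N=\lceil((n-1)m+2)/2\rceil$; an associated Hankel matrix of $\mathcal{A}$ is the $N\times N$ matrix with $(i,j)$ entry $v_{i+j-2}$, where, if $(n-1)m$ is odd, $v_{2\lceil(n-1)m/2\rceil}$ is an additional (arbitrary) real number. $\mathcal{A}$ is a strong Hankel tensor if an associated Hankel matrix is positive semi-definite. $\mathcal{A}x^{m-1}$ is the vector with $i$th component $\sum_{i_2,\dots,i_m=1}^n a_{ii_2\cdots i_m}x_{i_2}\cdots x_{i_m}$. A real $\lambda$ is a Z-eigenvalue with Z-eigenvector $x\in\mathbb{R}^n$ if $x^\top x=1$ and $\mathcal{A}x^{m-1}=\lambda x$. *)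

(* Defs.v *)
From mathcomp Require Import all_boot all_order all_algebra.
Set Implicit Arguments. Unset Strict Implicit. Unset Printing Implicit Defensive.
Import Order.TTheory GRing.Theory Num.Theory.
Local Open Scope ring_scope.

Definition tensor (R : Type) (m n : nat) := {ffun 'I_m -> 'I_n} -> R.

(* Hankel tensor generated by v: a_{i_1...i_m} = v_{i_1+...+i_m-m} (1-based),
   i.e. v applied to the sum of the 0-based indices. *)
Definition hankel_gen (R : Type) (m n : nat) (A : tensor R m n) (v : nat -> R) :=
  forall f : {ffun 'I_m -> 'I_n}, A f = v (\sum_(k < m) (nat_of_ord (f k)))%N.

Definition is_hankel (R : Type) (m n : nat) (A : tensor R m n) :=
  exists v : nat -> R, hankel_gen A v.

(* Size of the associated Hankel matrix: N = ceil(((n-1)m+2)/2). *)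
Definition hankel_N (m n : nat) : nat := (((n - 1) * m + 3) %/ 2)%N.

Definition assoc_hankel_mx (R : Type) (m n : nat) (v : nat -> R) :
  'M[R]_(hankel_N m n) := \matrix_(i, j) v (i + j)%N.

Definition psd_mx (R : numDomainType) (N : nat) (M : 'M[R]_N) :=
  forall y : 'cV[R]_N, 0 <= (y^T *m M *m y) 0 0.

(* Values of v beyond index (n-1)m do not
   affect A; the one possibly used at index 2N-2 = (n-1)m+1 (when (n-1)m is
   odd) is exactly the "additional arbitrary real number". *)
Definition strong_hankel (R : numDomainType) (m n : nat) (A : tensor R m n) :=
  exists v : nat -> R, hankel_gen A v /\ psd_mx (assoc_hankel_mx m n v).

(* (A x^{m-1})_i = sum_{i_2..i_m} a_{i i_2 ... i_m} x_{i_2} ... x_{i_m}. *)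
Definition tensor_apply (R : numDomainType) (m n : nat) (A : tensor R m n)
  (x : 'I_n -> R) (i : 'I_n) : R :=
  \sum_(f : {ffun 'I_m -> 'I_n} | [forall k : 'I_m, (nat_of_ord k == 0%N) ==> (f k == i)])
     A f * \prod_(k < m | nat_of_ord k != 0%N) x (f k).

Definition Z_eigenpair (R : numDomainType) (m n : nat) (A : tensor R m n)
  (lambda : R) (x : 'I_n -> R) :=
  \sum_(i < n) x i ^+ 2 = 1 /\ forall i : 'I_n, tensor_apply A x i = lambda * x i.

(* Main.v *)
Require Import Defs.
From mathcomp Require Import all_boot all_order all_algebra.
From mathcomp Require Import zify ring lra.
Import Order.TTheory GRing.Theory Num.Theory.
Set Implicit Arguments.
Local Open Scope ring_scope.
Section L.
Variable R : realFieldType.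
Variable v : nat -> R.
Variable B : nat.
Definition Lf (p : {poly R}) : R := \sum_(k < B) p`_k * v k.

Lemma Lf_sum (I : finType) (F : I -> {poly R}) :
  Lf (\sum_i F i) = \sum_i Lf (F i).
Proof.
rewrite /Lf (exchange_big) /=; apply: eq_bigr => k _.
by rewrite coef_sum mulr_suml.
Qed.

Lemma Lf_mono c e : (e < B)%N -> Lf (c *: 'X^e) = c * v e.
Proof.
move=> he; rewrite /Lf (bigD1 (Ordinal he)) //= coefZ coefXn eqxx mulr1.
rewrite big1 ?addr0 // => k hk; rewrite coefZ coefXn.
have -> : (nat_of_ord k == e) = false.
  by apply/negbTE; apply: contra hk => /eqP h; apply/eqP/val_inj.
by rewrite mulr0 mul0r.
Qed.
End L.
Lemma quad_nonneg (R : realFieldType) (m n B : nat) (v : nat -> R) (Q : {poly R}) :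
  psd_mx (assoc_hankel_mx m n v) -> (size Q <= hankel_N m n)%N ->
  (hankel_N m n + hankel_N m n <= B.+1)%N -> 0 <= Lf v B (Q * Q).
Proof.
set N := hankel_N m n => hpsd hs hB.
have QE : Q = \sum_(a < N) Q`_a *: 'X^a.
  rewrite -poly_def; apply/polyP => k; rewrite coef_poly.
  by case: ifP => // /negbT; rewrite -leqNgt => hk; by rewrite (leq_sizeP _ _ hs).
have -> : Q * Q = \sum_(a < N) \sum_(b < N) (Q`_a * Q`_b) *: 'X^(a + b).
  rewrite [X in X * _ = _]QE [X in _ * X = _]QE mulr_suml; apply: eq_bigr => a _.
  rewrite mulr_sumr; apply: eq_bigr => b _.
  by rewrite -scalerAl -scalerAr scalerA exprD.
have := hpsd (\col_a Q`_a).
set y := \col_a Q`_a.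
have -> : (y^T *m assoc_hankel_mx m n v *m y) 0 0 =
   \sum_(a < N) \sum_(b < N) (Q`_a * Q`_b) * v (a + b)%N.
  rewrite mxE exchange_big /=; apply: eq_bigr => b _.
  rewrite mxE mulr_suml; apply: eq_bigr => a _.
  rewrite !mxE /=; ring.
rewrite Lf_sum; congr (_ <= _); apply: eq_bigr => a _.
rewrite Lf_sum; apply: eq_bigr => b _; rewrite Lf_mono //.
have := ltn_ord a; have := ltn_ord b; lia.
Qed.
Lemma prod_scaleX (R : comNzRingType) M (c : 'I_M -> R) (e : 'I_M -> nat) :
  \prod_(k < M) (c k *: 'X^(e k)) = (\prod_k c k) *: ('X^(\sum_k e k) : {poly R}).
Proof.
rewrite (eq_bigr (fun k => (c k)%:P * 'X^(e k))); last by move=> k _; rewrite mul_polyC.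
rewrite big_split; change ((\prod_i (c i)%:P) * (\prod_i 'X^(e i)) = \prod_k c k *: 'X^(\sum_k e k)).
by rewrite prodrXr -rmorph_prod mul_polyC.
Qed.

Lemma sum_ord_lt M n (f : 'I_M -> 'I_n) : (0 < M)%N -> (\sum_(k < M) f k < M * n)%N.
Proof.
move=> hM.
have h1 : (\sum_(k < M) (f k).+1 <= \sum_(k < M) n)%N.
  by apply: leq_sum => k _; apply: ltn_ord.
have h2 : (\sum_(k < M) (f k).+1 = \sum_(k < M) f k + M)%N.
  rewrite (eq_bigr (fun k => f k + 1)%N); last by move=> k _; rewrite addn1.
  by rewrite big_split /= sum1_card card_ord.
rewrite sum_nat_const card_ord in h1. lia.
Qed.

Lemma tensor_L (R : realFieldType) m' n (A : tensor R m'.+1 n) v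
  (x : 'I_n -> R) (i : 'I_n) : hankel_gen A v ->
  tensor_apply A x i =
  Lf v (m'.+1 * n) ('X^i * (\sum_(j < n) x j *: 'X^j) ^+ m').
Proof.
move=> hA.
pose w (k : 'I_m'.+1) (j : 'I_n) : R := if k == ord0 then (j == i)%:R else x j.
have h1 : \prod_(k < m'.+1) (\sum_(j < n) w k j *: 'X^j) =
          'X^i * (\sum_(j < n) x j *: 'X^j) ^+ m'.
  rewrite big_ord_recl; congr (_ * _).
    rewrite (eq_bigr (fun j => (j == i)%:R *: 'X^j)); last by move=> j _; rewrite /w.
    rewrite (bigD1 (i : 'I_n)) //= (_ : (i == i) = true); last by apply/eqP. rewrite scale1r big1 ?addr0 // => j hj.
    by rewrite (negbTE hj) scale0r.
  rewrite (eq_bigr (fun _ => \sum_(j < n) x j *: 'X^j)); last first.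
    by move=> k _; apply: eq_bigr => j _; rewrite /w eq_sym (negbTE (neq_lift _ _)).
  by rewrite prodr_const card_ord.
rewrite -h1 bigA_distr_bigA /= Lf_sum.
rewrite /tensor_apply big_mkcond /=; apply: eq_bigr => f _.
rewrite prod_scaleX Lf_mono; last exact: sum_ord_lt.
rewrite hA [X in _ = X * _](bigD1 ord0) //=.
have hc : [forall k : 'I_m'.+1, (nat_of_ord k == 0%N) ==> (f k == i)] = (f ord0 == i).
  apply/forallP/idP => [H | /eqP H k].
    by have := H ord0; rewrite eqxx.
  apply/implyP => /eqP hk; have -> : k = ord0 by apply/val_inj.
  by rewrite H.
rewrite hc.
have -> : \prod_(k < m'.+1 | k != ord0) w k (f k) =
          \prod_(k < m'.+1 | nat_of_ord k != 0%N) x (f k).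
  apply: eq_big => k; first by [].
  by move=> hk; rewrite /w (negbTE hk).
rewrite /w /=.
by case: (f ord0 == i); rewrite ?mul1r ?mul0r // mulrC.
Qed.
Lemma key (R : realFieldType) q n (A : tensor R (q.*2.+1) n) v
  (x : 'I_n -> R) (i : 'I_n) : (1 <= q)%N ->
  hankel_gen A v -> psd_mx (assoc_hankel_mx (q.*2.+1) n v) -> ~~ odd i ->
  0 <= tensor_apply A x i.
Proof.
move=> hq hA hpsd hi.
rewrite (tensor_L R x i hA).
set P := \sum_(j < n) x j *: 'X^j.
set p := (i./2)%N.
have ip : nat_of_ord i = (p + p)%N.
  by have := odd_double_half i; rewrite (negbTE hi) add0n -addnn.
have -> : 'X^i * P ^+ q.*2 = ('X^p * P ^+ q) * ('X^p * P ^+ q).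
  by rewrite ip -addnn !exprD; ring.
have sP : (size P <= n)%N.
  apply/leq_sizeP => j hj; rewrite coef_sum big1 // => k _.
  rewrite coefZ coefXn.
  have -> : (j == k) = false by apply/negbTE; have := ltn_ord k; lia.
  by rewrite mulr0.
have hin := ltn_ord i.
apply: quad_nonneg => //.
  apply: (leq_trans (size_polyMleq _ _)); rewrite size_polyXn.
  have := size_poly_exp_leq P q.
  have : ((size P).-1 * q <= (n - 1) * q)%N by apply: leq_mul => //; lia.
  rewrite /hankel_N leq_divRL //.
  set s := size (P ^+ q); set t := ((size P).-1 * q)%N; set u := ((n-1) * q)%N.
  have -> : ((n - 1) * q.*2.+1 = u + u + (n - 1))%N.
    by rewrite /u -addnn mulnSr mulnDr.
  lia.
rewrite /hankel_N.
have := leq_trunc_div ((n - 1) * q.*2.+1 + 3) 2.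
set N := (_ %/ 2)%N.
have : ((n - 1) * q.*2.+1 + q.*2.+1 = q.*2.+1 * n)%N.
  have hn : n = (n - 1).+1 by lia.
  by rewrite -mulSnr -hn mulnC.
lia.
Qed.

Unset Implicit Arguments.

Theorem proposition6 (R : realFieldType) (m n : nat) (A : tensor R m n)
  (lambda : R) (x : 'I_n -> R) :
  (2 <= n)%N -> (3 <= m)%N -> odd m ->
  strong_hankel A -> Z_eigenpair A lambda x ->
  (0 < lambda -> forall i : 'I_n, ~~ odd (nat_of_ord i) -> 0 <= x i) /\
  (lambda < 0 -> forall i : 'I_n, ~~ odd (nat_of_ord i) -> x i <= 0).
Proof.
move=> hn hm om [v [hA hpsd]] [_ heig].
have [q hq] : exists q, m = q.*2.+1.
  exists m./2; have := odd_double_half m; rewrite om; lia.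
subst m.
have q1 : (1 <= q)%N by lia.
have K (i : 'I_n) : ~~ odd i -> 0 <= lambda * x i.
  by move=> hi; rewrite -heig; exact: (key q x i q1 hA hpsd hi).
split=> hl i hi; have := K i hi.
  by rewrite pmulr_rge0.
by rewrite nmulr_rge0.
Qed.
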